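(* Let $a_1,\dots,a_m\in\mathbb R^n$ satisfy $\mathbb E_{i\in[m]}\|a_i\|_2^4\ge1$ and let $A=\sum_{i=1}^m e_ia_i^T/\sqrt n$. Then $\|A\|_{2\to4}\ge\left(\frac{3}{1+2/n}\right)^{1/4}$.
   Context: $e_i$ is the $i$-th standard basis vector of $\mathbb R^m$, so $(Ax)_i=\frac1{\sqrt n}\sum_{j}a_{i,j}x_j$. Norms are expectation norms: for $v\in\mathbb R^N$, $\|v\|_p=(\frac1N\sum_{j}|v_j|^p)^{1/p}$, and $\|A\|_{2\to4}=\max_{x\ne0}\|Ax\|_4/\|x\|_2$; $\mathbb E_{i\in[m]}$ is the uniform average over $i$. *)

(* Defs.v *)
From HB Require Import structures.
From mathcomp Require Import all_boot all_order all_algebra.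
From mathcomp Require Import all_classical all_reals all_analysis.
Set Implicit Arguments. Unset Strict Implicit. Unset Printing Implicit Defensive.
Import Order.TTheory GRing.Theory Num.Theory.
Local Open Scope ring_scope.
Local Open Scope classical_set_scope.

(* Expectation norm of v in R^N (column vector):
   ||v||_p = ((1/N) sum_j |v_j|^p)^(1/p). *)
Definition enorm (R : realType) (N : nat) (p : R) (v : 'cV[R]_N) : R :=
  ((N%:R)^-1 * \sum_(j < N) `|v j 0| `^ p) `^ p^-1.

Definition opnorm24 (R : realType) (m n : nat) (A : 'M[R]_(m, n)) : R :=
  sup [set enorm 4 (A *m x) / enorm 2 x | x in [set x : 'cV[R]_n | x != 0]].

Definition e_ {R : realType} {m : nat} (i : 'I_m) : 'cV[R]_m := delta_mx i 0.

(* Main.v *)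
Require Import Defs.
From HB Require Import structures.
From mathcomp Require Import all_boot all_order all_algebra.
From mathcomp Require Import all_classical all_reals all_analysis.
From mathcomp Require Import ring lra.
Import Order.TTheory GRing.Theory Num.Theory.
Local Open Scope ring_scope.




Fixpoint Avg {R : realType} (k : nat) (f : seq R -> R) : R :=
  match k with
  | 0 => f [::]
  | k'.+1 => (Avg k' (fun s => f (1 :: s)) + Avg k' (fun s => f (-1 :: s))) / 2
  end.

Lemma Avg_ext {R : realType} k (f g : seq R -> R) : (forall s, f s = g s) -> Avg k f = Avg k g.
Proof.
elim: k f g => [|k IH] f g fg /=; first exact: fg.
by rewrite (IH (fun s => f (1 :: s)) (fun s => g (1 :: s))) ?(IH (fun s => f (-1 :: s)) (fun s => g (-1 :: s))).
Qed.

Lemma Avg_sum {R : realType} k (I : finType) (f : I -> seq R -> R) :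
  Avg k (fun s => \sum_i f i s) = \sum_i Avg k (f i).
Proof.
elim: k f => [|k IH] f //=.
rewrite (IH (fun i s => f i (1 :: s))) (IH (fun i s => f i (-1 :: s))).
by rewrite -big_split /= mulr_suml.
Qed.

Lemma Avg_exists {R : realType} k (f : seq R -> R) : exists s, (forall j, (j < k)%N -> s`_j ^+ 2 = 1) /\ Avg k f <= f s.
Proof.
elim: k f => [|k IH] f /=; first by exists [::]; split.
have [s1 [h1 a1]] := IH (fun s => f (1 :: s)).
have [s2 [h2 a2]] := IH (fun s => f (-1 :: s)).
have [le12|lt21] := lerP (f (1 :: s1)) (f (-1 :: s2)).
- exists (-1 :: s2); split.
    by case=> [|j] /=; [rewrite sqrrN expr1n | exact: h2].
  rewrite ler_pdivrMr //; lra.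
- exists (1 :: s1); split.
    by case=> [|j] /=; [rewrite expr1n | exact: h1].
  rewrite ler_pdivrMr //; lra.
Qed.

Lemma Avg_moment {R : realType} k (l : nat -> R) (c : R) :
  Avg k (fun s => (c + \sum_(j < k) l j * s`_j) ^+ 4) =
  c ^+ 4 + 6 * c ^+ 2 * (\sum_(j < k) l j ^+ 2) + 3 * (\sum_(j < k) l j ^+ 2) ^+ 2
   - 2 * \sum_(j < k) l j ^+ 4.
Proof.
elim: k l c => [|k IH] l c /=.
  by rewrite !big_ord0; ring.
set S := \sum_(j < k) l j.+1 ^+ 2.
set Q := \sum_(j < k) l j.+1 ^+ 4.
rewrite (Avg_ext k (fun s => (c + \sum_(j < k.+1) l j * (1 :: s)`_j) ^+ 4)
   (fun s => ((c + l 0%N) + \sum_(j < k) l j.+1 * s`_j) ^+ 4)); last first.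
  by move=> s /=; rewrite big_ord_recl /= mulr1 addrA.
rewrite (Avg_ext k (fun s => (c + \sum_(j < k.+1) l j * (-1 :: s)`_j) ^+ 4)
  (fun s => ((c - l 0%N) + \sum_(j < k) l j.+1 * s`_j) ^+ 4)); last first.
  by move=> s /=; rewrite big_ord_recl /= mulrN1 addrA.
rewrite (IH (fun j => l j.+1)) (IH (fun j => l j.+1)) !big_ord_recl /= -/S -/Q.
rewrite -/S -/Q; by field.
Qed.

Lemma cauchy_schwarz {R : realType} n (u v : 'I_n -> R) :
  (\sum_j u j * v j) ^+ 2 <= (\sum_j u j ^+ 2) * (\sum_j v j ^+ 2).
Proof.
rewrite expr2 mulr_suml.
under eq_bigr do rewrite mulr_sumr.
rewrite mulr_suml.
under [X in _ <= X]eq_bigr do rewrite mulr_sumr.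
have -> : \sum_i \sum_j u i ^+ 2 * v j ^+ 2 =
   \sum_i \sum_j (u i ^+ 2 * v j ^+ 2 + u j ^+ 2 * v i ^+ 2) / 2.
  under [RHS]eq_bigr do rewrite -mulr_suml big_split /=.
  rewrite -mulr_suml big_split /=.
  rewrite [X in _ = (_ + X) / 2]exchange_big /=.
  by field.
apply: ler_sum => i _; apply: ler_sum => j _.
rewrite ler_pdivlMr //; have := sqr_ge0 (u i * v j - u j * v i); nra.
Qed.

Lemma root_pow {R : realType} (a : R) k : (0 < k)%N -> 0 <= a -> (a `^ (k%:R^-1)) ^+ k = a.
Proof.
move=> k0 a0; rewrite -powR_mulrn ?powR_ge0 // -powRrM mulVf ?powRr1 //.
by rewrite pnatr_eq0 -lt0n.
Qed.




Definition dotv {R : realType} {n : nat} (u v : 'cV[R]_n) : R := \sum_j u j 0 * v j 0.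
Definition sqv {R : realType} {n : nat} (x : 'cV[R]_n) : R := \sum_j x j 0 ^+ 2.

Lemma entryA (R : realType) (m n : nat) (a : 'I_m -> 'cV[R]_n) (x : 'cV[R]_n) i :
  (((Num.sqrt (n%:R))^-1 *: \sum_(k < m) ((e_ k : 'cV[R]_m) *m (a k)^T)) *m x) i 0
  = (Num.sqrt (n%:R))^-1 * dotv (a i) x.
Proof.
rewrite -scalemxAl mxE mulmx_suml summxE; congr (_ * _).
rewrite (bigD1 i) //= big1 ?addr0; last first.
  move=> k nki; rewrite -mulmxA mxE big_ord1 /e_ mxE [i == k]eq_sym (negbTE nki) /= mul0r //.
rewrite -mulmxA mxE big_ord1 /e_ mxE !eqxx mul1r mxE /dotv.
by apply: eq_bigr => j _; rewrite mxE.
Qed.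

Lemma enorm2E (R : realType) n (x : 'cV[R]_n) :
  enorm 2 x = (n%:R^-1 * sqv x) `^ (2%:R^-1).
Proof.
rewrite /enorm /sqv; congr ((_ * _) `^ _); apply: eq_bigr => j _.
by rewrite powR_mulrn // real_normK // num_real.
Qed.

Lemma enorm4E (R : realType) n (x : 'cV[R]_n) :
  enorm 4 x = (n%:R^-1 * \sum_j x j 0 ^+ 4) `^ (4%:R^-1).
Proof.
rewrite /enorm; congr ((_ * _) `^ _); apply: eq_bigr => j _.
rewrite powR_mulrn // -normrX ger0_norm //.
by rewrite (_ : 4%N = 2 * 2)%N // exprM sqr_ge0.
Qed.

Lemma dot_delta (R : realType) n (u : 'cV[R]_n) j : dotv u (delta_mx j 0) = u j 0.
Proof.
rewrite /dotv (bigD1 j) //= big1 ?addr0; first by rewrite mxE !eqxx mulr1.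
by move=> k nkj; rewrite mxE (negbTE nkj) mulr0.
Qed.

Lemma sq_delta (R : realType) n (j : 'I_n) : sqv (delta_mx j 0 : 'cV[R]_n) = 1.
Proof.
rewrite /sqv (bigD1 j) //= big1 ?addr0; first by rewrite mxE !eqxx expr1n.
by move=> k nkj; rewrite mxE (negbTE nkj) expr0n.
Qed.

Definition ext {R : realType} {n : nat} (f : 'I_n -> R) (j : nat) : R :=
  if insub j is Some k then f k else 0.

Lemma ext_val (R : realType) n (f : 'I_n -> R) (k : 'I_n) : ext f k = f k.
Proof. by rewrite /ext valK. Qed.

Lemma ratio_lb (R : realType) (r s t : R) : 0 <= r -> 0 < s -> 0 <= t ->
  t ^+ 4 * s ^+ 4 <= r ^+ 4 -> t <= r / s.
Proof.
move=> r0 s0 t0 h; rewrite ler_pdivlMr //.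
by rewrite -(@ler_pXn2r _ 4) ?nnegrE ?mulr_ge0 ?(ltW s0) // exprMn.
Qed.

Lemma ratio_ub (R : realType) (r s C : R) : 0 <= r -> 0 <= s -> 0 <= C ->
  r ^+ 4 <= C * s ^+ 4 -> r / s <= 1 + C.
Proof.
move=> r0 s0 C0 h; have [->|sn0] := eqVneq s 0; first by rewrite invr0 mulr0; lra.
have sp : 0 < s by rewrite lt_def sn0.
rewrite ler_pdivrMr //.
rewrite -(@ler_pXn2r _ 4) ?nnegrE ?mulr_ge0 ?addr_ge0 ?(ltW sp) // exprMn.
apply: (le_trans h); rewrite ler_wpM2r ?exprn_ge0 ?(ltW sp) //.
have h1 : 1 <= 1 + C by lra.
have h3 := exprn_ege1 3 h1.
rewrite exprS; nra.
Qed.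



Lemma exist_good (R : realType) m n (a : 'I_m -> 'cV[R]_n) : (0 < n)%N ->
  exists x : 'cV[R]_n, 0 < sqv x /\
   3 * (\sum_i sqv (a i) ^+ 2) * sqv x ^+ 2 <=
     n%:R * (n%:R + 2) * \sum_i dotv (a i) x ^+ 4.
Proof.
move=> n0.
set T := \sum_i sqv (a i) ^+ 2.
pose Phi := fun x : 'cV[R]_n => \sum_i dotv (a i) x ^+ 4.
rewrite -/(Phi _).
set Qs := \sum_i \sum_j a i j 0 ^+ 4.
have hE : \sum_(j < n) Phi (delta_mx j 0) = Qs.
  rewrite /Phi exchange_big /=; apply: eq_bigr => i _; apply: eq_bigr => j _.
  by rewrite dot_delta.
pose xs (s : seq R) : 'cV[R]_n := \col_j s`_j.
have hA : Avg n (fun s => Phi (xs s)) = 3 * T - 2 * Qs.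
  rewrite (Avg_ext n _ (fun s => \sum_i (0 + \sum_(j < n) ext (fun k => a i k 0) j * s`_j) ^+ 4)); last first.
    move=> s; rewrite /Phi; apply: eq_bigr => i _; rewrite add0r /dotv.
    by congr (_ ^+ _); apply: eq_bigr => j _; rewrite ext_val mxE.
  rewrite Avg_sum.
  under eq_bigr do rewrite Avg_moment.
  rewrite /T /Qs mulr_sumr mulr_sumr -sumrB; apply: eq_bigr => i _.
  have -> : \sum_(j < n) ext (fun k => a i k 0) j ^+ 2 = sqv (a i).
    by apply: eq_bigr => j _; rewrite ext_val.
  have -> : \sum_(j < n) ext (fun k => a i k 0) j ^+ 4 = \sum_j a i j 0 ^+ 4.
    by apply: eq_bigr => j _; rewrite ext_val.
  ring.
have Np : 0 < n%:R :> R by rewrite ltr0n.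
have [[j hj]|noj] := pselect (exists j : 'I_n, 3 * T <= n%:R * (n%:R + 2) * Phi (delta_mx j 0)).
  exists (delta_mx j 0); rewrite sq_delta; split; first lra.
  by rewrite expr1n mulr1.
have [s [hs hav]] := Avg_exists n (fun s => Phi (xs s)).
have sqs : sqv (xs s) = n%:R.
  rewrite /sqv; under eq_bigr do rewrite mxE hs ?ltn_ord //.
  by rewrite sumr_const card_ord.
have [ok|bad] := lerP (3 * T * n%:R ^+ 2) (n%:R * (n%:R + 2) * Phi (xs s)).
  by exists (xs s); rewrite sqs; split.
exfalso.
have h1 : n%:R * (n%:R + 2) * Qs <= 3 * T * n%:R.
  rewrite -hE mulr_sumr.
  have -> : 3 * T * n%:R = \sum_(j < n) 3 * T.
    by rewrite sumr_const card_ord mulr_natr.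
  apply: ler_sum => j _; apply/ltW; rewrite ltNge; apply/negP => hj.
  by apply: noj; exists j.
have h2 : n%:R * (n%:R + 2) * (3 * T - 2 * Qs) < 3 * T * n%:R ^+ 2.
  rewrite -hA; apply: (le_lt_trans _ bad); rewrite ler_wpM2l //.
have e : n%:R * (n%:R + 2) * (3 * T - 2 * Qs) =
   3 * T * n%:R ^+ 2 + 6 * (T * n%:R) - 2 * (n%:R * (n%:R + 2) * Qs) :> R by ring.
have e2 : 3 * T * n%:R = 3 * (T * n%:R) :> R by ring.
rewrite e in h2; rewrite e2 in h1; lra.
Qed.



Lemma pow4_ge0 {R : realType} (x : R) : 0 <= x ^+ 4.
Proof. by rewrite (_ : 4%N = (2 * 2)%N) // exprM sqr_ge0. Qed.

Lemma s2E (R : realType) n (x : 'cV[R]_n) : enorm 2 x ^+ 2 = n%:R^-1 * sqv x.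
Proof.
rewrite enorm2E root_pow // mulr_ge0 ?invr_ge0 ?ler0n //.
by apply: sumr_ge0 => j _; apply: sqr_ge0.
Qed.

Lemma r4E (R : realType) (m n : nat) (a : 'I_m -> 'cV[R]_n) (x : 'cV[R]_n) :
  enorm 4 (((Num.sqrt (n%:R))^-1 *: \sum_(k < m) ((e_ k : 'cV[R]_m) *m (a k)^T)) *m x) ^+ 4
  = m%:R^-1 * (n%:R^-1 ^+ 2 * \sum_i dotv (a i) x ^+ 4).
Proof.
rewrite enorm4E root_pow //; last first.
  by rewrite mulr_ge0 ?invr_ge0 ?ler0n // sumr_ge0 // => i _; apply: pow4_ge0.
congr (_ * _); rewrite mulr_sumr; apply: eq_bigr => i _.
rewrite entryA exprMn; congr (_ * _).
rewrite !exprVn (_ : 4%N = (2 * 2)%N) // exprM sqr_sqrtr ?ler0n //.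
Qed.

Lemma phi_ub (R : realType) (m n : nat) (a : 'I_m -> 'cV[R]_n) (x : 'cV[R]_n) :
  \sum_i dotv (a i) x ^+ 4 <= (\sum_i sqv (a i) ^+ 2) * sqv x ^+ 2.
Proof.
rewrite mulr_suml; apply: ler_sum => i _.
have cs := cauchy_schwarz _ (fun j => a i j 0) (fun j => x j 0).
rewrite -exprMn (_ : 4%N = (2 * 2)%N) // exprM.
rewrite ler_pXn2r //; rewrite ?nnegrE ?sqr_ge0 //.
exact: le_trans (sqr_ge0 _) cs.
Qed.



Theorem lemma7p4 (R : realType) (m n : nat) (a : 'I_m -> 'cV[R]_n) :
  (0 < m)%N -> (0 < n)%N ->
  1 <= (m%:R)^-1 * \sum_(i < m) (enorm 2 (a i)) ^+ 4 ->
  (3 / (1 + 2 / n%:R)) `^ (4%:R^-1) <=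
    opnorm24 ((Num.sqrt (n%:R))^-1 *: \sum_(i < m) ((e_ i : 'cV[R]_m) *m (a i)^T)).
Proof.
move=> m0 n0 hyp.
rewrite /opnorm24.
set T := \sum_i sqv (a i) ^+ 2.
have Np : 0 < n%:R :> R by rewrite ltr0n.
have Mp : 0 < m%:R :> R by rewrite ltr0n.
have T0 : 0 <= T by apply: sumr_ge0 => i _; apply: sqr_ge0.
have Hub : has_ubound [set enorm 4 (((Num.sqrt (n%:R))^-1 *: \sum_(i < m) ((e_ i : 'cV[R]_m) *m (a i)^T)) *m x) / enorm 2 x | x in [set x : 'cV[R]_n | x != 0]].
  exists (1 + m%:R^-1 * T) => _ [x _ <-].
  apply: ratio_ub; rewrite ?powR_ge0 ?mulr_ge0 ?invr_ge0 ?ler0n //.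
  rewrite r4E (_ : 4%N = (2 * 2)%N) // exprM s2E -[(2 * 2)%N]/4%N.
  rewrite exprMn -[m%:R^-1 * T * _]mulrA ler_wpM2l ?invr_ge0 ?ler0n // [in X in _ <= X]mulrCA ler_wpM2l //.
  exact: phi_ub.
have [x [sqp key]] := @exist_good _ _ _ a n0.
have x0 : x != 0.
  apply/eqP => x0; move: sqp; rewrite x0 /sqv big1 ?ltxx // => j _.
  by rewrite mxE expr0n.
have hx : enorm 4 (((Num.sqrt (n%:R))^-1 *: \sum_(i < m) ((e_ i : 'cV[R]_m) *m (a i)^T)) *m x) / enorm 2 x <= sup [set enorm 4 (((Num.sqrt (n%:R))^-1 *: \sum_(i < m) ((e_ i : 'cV[R]_m) *m (a i)^T)) *m x) / enorm 2 x | x in [set x : 'cV[R]_n | x != 0]].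
  by apply: (ub_le_sup Hub); exists x.
apply: (le_trans _ hx).
have s0 : 0 < enorm 2 x by rewrite enorm2E powR_gt0 // mulr_gt0 // invr_gt0.
apply: ratio_lb; rewrite ?powR_ge0 ?(ltW s0) //.
rewrite root_pow //.
rewrite r4E (_ : 4%N = (2 * 2)%N) // exprM s2E -[(2 * 2)%N]/4%N.
have hT : m%:R * n%:R ^+ 2 <= T.
  move: hyp; rewrite ler_pdivlMl // mulr1.
  have -> : \sum_i enorm 2 (a i) ^+ 4 = n%:R^-1 ^+ 2 * T.
    rewrite /T mulr_sumr; apply: eq_bigr => i _.
    by rewrite (_ : 4%N = (2 * 2)%N) // exprM s2E exprMn.
  move=> h; have -> : T = n%:R ^+ 2 * (n%:R^-1 ^+ 2 * T).
    by field; rewrite gt_eqF.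
  by rewrite mulrC ler_wpM2l ?exprn_ge0 ?ler0n.
set P := \sum_i dotv (a i) x ^+ 4.
set q := sqv x.
have ce : 3 / (1 + 2 / n%:R) = 3 * n%:R / (n%:R + 2) :> R.
  by field; rewrite ?gt_eqF //; lra.
rewrite ce exprMn mulrCA [in X in _ <= X]mulrCA; apply: ler_wpM2l; first by rewrite exprn_ge0 // invr_ge0 ltW.
rewrite ler_pdivlMl // mulrA.
have NN : 0 < n%:R * (n%:R + 2) :> R by apply: mulr_gt0 => //; lra.
rewrite -(@ler_pM2l _ (n%:R * (n%:R + 2))) //.
apply: le_trans key.
have -> : n%:R * (n%:R + 2) * (m%:R * (3 * n%:R / (n%:R + 2)) * q ^+ 2)
   = 3 * (m%:R * n%:R ^+ 2) * q ^+ 2 by field; rewrite gt_eqF //; lra.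
by rewrite ler_wpM2r ?sqr_ge0 // ler_wpM2l.
Qed.
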